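(* Let $f:\mathcal X\to\mathbb R$ be Lipschitz continuous with Lipschitz constant $|f|_1<\infty$. Then for every $\varepsilon>0$ the maximum $M_f=\max_{x\in\mathcal X}f(x)$ satisfies \[|M_f-\varepsilon L_{f/\varepsilon}|\le\varepsilon d\log(1+3d^{-1/2}|f|_1/\varepsilon),\] and the right-hand side tends to $0$ as $\varepsilon\searrow0$. Moreover, for any bounded measurable $f:\mathcal X\to\mathbb R$, any $\varepsilon>0$ and any $\delta\in(0,1]$, \[P_{f/\varepsilon}(\{x\in\mathcal X:f(x)<\varepsilon L_{f/\varepsilon}-\varepsilon\log(1/\delta)\})\le\delta.\]
   Context: $\mathcal X=[0,1]^d$ with Lebesgue measure. For bounded measurable $h$: $Z_h=\int_{\mathcal X}e^h dx$, $L_h=\log Z_h$, $P_h$ the distribution with density $e^h/Z_h$. $|f|_1$ denotes the minimal Lipschitz constant with respect to the Euclidean norm. *)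

(* Defs.v *)
From HB Require Import structures.
From mathcomp Require Import all_boot all_order all_algebra.
From mathcomp Require Import all_classical all_reals all_analysis.
Unset Printing Implicit Defensive.
Import Order.TTheory GRing.Theory Num.Theory.
Import numFieldNormedType.Exports.
Local Open Scope classical_set_scope.
Local Open Scope ring_scope.

Section defs.
Variable R : realType.

(* d-dimensional Lebesgue measure on R^d = d.-tuple R (with the product
   sigma-algebra of the library), defined as the iterated product measure
   lambda_{n+1}(A) = \int lambda_n(x-section of A) dx, lambda_0 = Dirac. *)
Fixpoint lebesgue_tuple (n : nat) : set (n.-tuple R) -> \bar R :=
  match n return set (n.-tuple R) -> \bar R with
  | 0 => fun A => (\1_A [tuple] : R)%:E
  | n'.+1 => fun A =>
      (\int[@lebesgue_measure R]_x
          lebesgue_tuple n' [set t : n'.-tuple R | A (cons_tuple x t)])%E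
  end.

Definition cube (d : nat) : set (d.-tuple R) :=
  [set x | forall i : 'I_d, 0 <= tnth x i <= 1].

Definition eucl_dist (d : nat) (x y : d.-tuple R) : R :=
  Num.sqrt (\sum_(i < d) (tnth x i - tnth y i) ^+ 2).

Definition lipconst (d : nat) (f : d.-tuple R -> R) : R :=
  inf [set C : R | 0 <= C /\
         forall x y, cube d x -> cube d y -> `|f x - f y| <= C * eucl_dist d x y].

Definition Zpart (d : nat) (h : d.-tuple R -> R) : R :=
  fine (\int[@lebesgue_tuple d]_(x in cube d) (expR (h x))%:E)%E.

Definition Lpart (d : nat) (h : d.-tuple R -> R) : R := ln (Zpart d h).

Definition Pgibbs (d : nat) (h : d.-tuple R -> R) (A : set (d.-tuple R)) : R :=
  fine (\int[@lebesgue_tuple d]_(x in A `&` cube d) (expR (h x))%:E)%E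
  / Zpart d h.

(* M_f = max_{x in X} f(x) (the supremum of f over X, attained for continuous f) *)
Definition maxf (d : nat) (f : d.-tuple R -> R) : R := sup (f @` cube d).

End defs.

Arguments lebesgue_tuple {R}.
Arguments cube {R}.
Arguments eucl_dist {R}.
Arguments lipconst {R}.
Arguments Zpart {R}.
Arguments Lpart {R}.
Arguments Pgibbs {R}.
Arguments maxf {R}.

(* Main.v *)
Require Import Defs.
From HB Require Import structures.
From mathcomp Require Import all_boot all_order all_algebra.
From mathcomp Require Import all_classical all_reals all_analysis.
Import Order.TTheory GRing.Theory Num.Theory.
Import numFieldNormedType.Exports.
Local Open Scope classical_set_scope.
Local Open Scope ring_scope.
From mathcomp Require Import ring lra.
Section tm.
Context (R : realType).

Definition gcons (n : nat) (p : (R * n.-tuple R)%type) : n.+1.-tuple R :=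
  cons_tuple p.1 p.2.
Arguments gcons {n}.

Lemma gcons_meas n : measurable_fun [set: (R * n.-tuple R)%type] (@gcons n).
Proof.
exact: (@measurable_cons _ _ _ _ fst n snd).
Qed.

Definition ghd (n : nat) (t : n.+1.-tuple R) : (R * n.-tuple R)%type :=
  (thead t, [tuple of behead t]).
Arguments ghd {n}.

Lemma ghd_meas n : measurable_fun [set: n.+1.-tuple R] (@ghd n).
Proof.
apply/measurable_fun_pairP; split.
  exact: measurable_tnth.
exact: measurable_behead.
Qed.

Lemma ghdK n p : @ghd n (gcons p) = p.
Proof.
case: p => x t; rewrite /ghd /gcons /=; congr pair.
by apply: val_inj.
Qed.

Section push.
Variable n : nat.
Variable mu : {sigma_finite_measure set (n.-tuple R) -> \bar R}.

Definition nuS := pushforward (@lebesgue_measure R \x mu)%E (@gcons n).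

Let nuS0 : nuS set0 = 0%E.
Proof. by rewrite /nuS /pushforward preimage_set0 measure0. Qed.

Let nuS_ge0 A : (0 <= nuS A)%E.
Proof. by rewrite /nuS /pushforward; exact: measure_ge0. Qed.

Let nuS_sigma_additive : semi_sigma_additive nuS.
Proof.
move=> F mF tF mUF; rewrite /nuS /pushforward preimage_bigcup.
apply: measure_semi_sigma_additive.
- by move=> k; rewrite -[X in measurable X]setTI; exact: gcons_meas.
- apply/trivIsetP => /= i j _ _ ij; rewrite -preimage_setI.
  by move/trivIsetP : tF => /(_ _ _ _ _ ij) ->//; rewrite preimage_set0.
- by rewrite -preimage_bigcup -[X in measurable X]setTI; exact: gcons_meas.
Qed.

HB.instance Definition _ := isMeasure.Build _ _ _ nuS
  nuS0 nuS_ge0 nuS_sigma_additive.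

Let prod_sf : sigma_finite setT (@lebesgue_measure R \x mu)%E.
Proof.
have /sigma_finiteP[F [TF ndF Foo]] := sigma_finiteT (@lebesgue_measure R).
have /sigma_finiteP[G [TG ndG Goo]] := sigma_finiteT mu.
exists (fun m => F m `*` G m).
 rewrite -setXTT TF TG predeqE => -[x y]; split.
    move=> [/= [m _ Fnx] [k _ Gky]]; exists (maxn m k) => //; split.
    - by move: x Fnx; exact/subsetPset/ndF/leq_maxl.
    - by move: y Gky; exact/subsetPset/ndG/leq_maxr.
  by move=> [m _ []/= ? ?]; split; exists m.
move=> k; have [? ?] := Foo k; have [? ?] := Goo k.
split; first exact: measurableX.
by rewrite product_measure1E// lte_mul_pinfty// ge0_fin_numE.
Qed.

Let nuS_sigma_finite : sigma_finite setT nuS.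
Proof.
have [F UF mF] := prod_sf.
exists (fun k => (@ghd n) @^-1` F k).
  by rewrite -preimage_bigcup -UF preimage_setT.
move=> k; split.
  have := ghd_meas n measurableT _ (mF k).1; by rewrite setTI.
rewrite /nuS /pushforward.
have -> : (@gcons n) @^-1` ((@ghd n) @^-1` F k) = F k.
  by apply/seteqP; split => p /=; rewrite ghdK.
exact: (mF k).2.
Qed.

HB.instance Definition _ := Measure_isSigmaFinite.Build _ _ _ nuS
  nuS_sigma_finite.

End push.

Lemma lt_measure n : exists mu : {sigma_finite_measure set (n.-tuple R) -> \bar R},
  lebesgue_tuple n = mu.
Proof.
elim: n => [|n [mu IH]].
  by exists (\d_([tuple] : 0.-tuple R)).
exists (nuS n mu); apply/funext => A /=.
rewrite /nuS /pushforward /product_measure1 /= IH.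
apply: eq_integral => x _ /=; congr (mu _).
by apply/seteqP; split => t /=; rewrite /xsection /= inE.
Qed.


Definition box n (a b : nat -> R) : set (n.-tuple R) :=
  [set t | forall i : 'I_n, a i <= tnth t i <= b i].

Lemma box_cons n a b x (t : n.-tuple R) :
  box n.+1 a b (cons_tuple x t) <->
  (a 0%N <= x <= b 0%N) /\ box n (fun i => a i.+1) (fun i => b i.+1) t.
Proof.
split.
- move=> H; split; first by have := H ord0; rewrite (tnth_nth 0).
  move=> i; have := H (lift ord0 i); rewrite !(tnth_nth 0) /=.
  by rewrite /bump /= add1n.
- move=> [H0 H] i; case: (unliftP ord0 i) => [j ->|->].
    by have := H j; rewrite !(tnth_nth 0) /= /bump /= add1n.
  by rewrite (tnth_nth 0).
Qed.

Lemma box_meas n a b : measurable (box n a b).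
Proof.
have -> : box n a b = \bigcap_(i in [set: 'I_n])
    ((fun t : n.-tuple R => tnth t i) @^-1` [set` `[a i, b i]%R]).
  apply/seteqP; split => t /= H i.
    by move=> _ /=; rewrite in_itv; exact: H.
  by have := H i I; rewrite /= in_itv.
apply: fin_bigcap_measurable; first exact: finite_finset.
move=> i _; rewrite -[X in measurable X]setTI.
have := @measurable_tnth _ R n i measurableT _ (measurable_itv `[a i, b i]%R).
by [].
Qed.

Lemma lt_set0 n : @lebesgue_tuple R n set0 = 0%E.
Proof. by have [mu ->] := lt_measure n; rewrite measure0. Qed.

Lemma lt_box n (a b : nat -> R) : (forall i, a i <= b i) ->
  lebesgue_tuple n (box n a b) = (\prod_(i < n) (b i - a i))%:E.
Proof.
elim: n a b => [|n IH] a b ab.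
  rewrite /= big_ord0 indicE.
  by have -> : ([tuple] : 0.-tuple R) \in box 0 a b by rewrite inE => -[].
rewrite /=.
pose I0 := [set` `[a 0%N, b 0%N]%R] : set R.
have mI0 : measurable I0 by exact: measurable_itv.
transitivity (\int[@lebesgue_measure R]_x
   ((\1_I0 x)%:E * (\prod_(i < n) (b i.+1 - a i.+1))%:E))%E.
  apply: eq_integral => x _; rewrite indicE.
  case: (boolP (x \in I0)) => xI0.
    rewrite mul1e -(IH (fun i => a i.+1) (fun i => b i.+1)) //.
    congr lebesgue_tuple; apply/seteqP; split => t /=.
      by move=> /box_cons [].
    move=> H; apply/box_cons; split => //.
    by move: xI0; rewrite /I0 inE /= in_itv.
  rewrite [X in (X * _)%E](_ : _ = 0%E) ?mul0e //.
  rewrite -(lt_set0 n); congr lebesgue_tuple.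
  apply/seteqP; split => t //= /box_cons [H _].
  by move/negP: xI0; apply; rewrite /I0 inE /= in_itv.
rewrite ge0_integralZr; last 4 first.
- exact: measurableT.
- by apply/measurable_realfun.measurable_EFinP; exact: measurable_realfun.measurable_indic.
- by move=> x _; rewrite lee_fin.
- by rewrite lee_fin; apply: prodr_ge0 => i _; rewrite subr_ge0.
have hI : @lebesgue_measure R I0 = (if (a 0%N < b 0%N)%R then (b 0%N - a 0%N)%:E else 0)%E.
  by rewrite /I0 lebesgue_measure_itv /= lte_fin -EFinB.
rewrite integral_indic // setIT.
rewrite [X in (X * _)%E](_ : _ = (if (a 0%N < b 0%N)%R then (b 0%N - a 0%N)%:E else 0)%E); last exact: hI.
rewrite big_ord_recl /=.
case: (ltrP (a 0%N) (b 0%N)) => h.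
  by rewrite -EFinM.
have -> : b 0%N = a 0%N by apply/le_anti; rewrite h ab.
by rewrite subrr mul0r mul0e.
Qed.

End tm.
Section intlem.
Context d (T : measurableType d) (R : realType) (mu : {measure set T -> \bar R}).
Local Open Scope ereal_scope.

Lemma int_mono (D1 D2 : set T) (f g : T -> \bar R) :
  (forall x, D1 x -> 0 <= f x) -> (forall x, D2 x -> 0 <= g x) ->
  (forall x, D1 x -> D2 x /\ f x <= g x) ->
  \int[mu]_(x in D1) f x <= \int[mu]_(x in D2) g x.
Proof.
move=> f0 g0 fg; rewrite !ge0_integralE //; apply: ereal_sup_le.
move=> _ [h hf <-]; exists h => // x; apply: le_trans (hf x) _.
rewrite /patch; case: ifPn => [|_].
  by rewrite inE => /fg [D2x le]; rewrite mem_set.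
by case: ifPn => // /set_mem /g0.
Qed.

Lemma int_lb (D B : set T) (f : T -> \bar R) (c : R) :
  measurable B -> B `<=` D -> (0 <= c)%R ->
  (forall x, D x -> 0 <= f x) -> (forall x, B x -> c%:E <= f x) ->
  c%:E * mu B <= \int[mu]_(x in D) f x.
Proof.
move=> mB BD c0 f0 fc; rewrite -integral_cst //.
apply: int_mono.
- by move=> x _ /=; rewrite lee_fin.
- exact: f0.
- by move=> x Bx; split; [exact: BD|exact: fc].
Qed.

Lemma int_ub (D : set T) (f : T -> \bar R) (c : R) :
  measurable D -> (0 <= c)%R ->
  (forall x, D x -> 0 <= f x) -> (forall x, D x -> f x <= c%:E) ->
  \int[mu]_(x in D) f x <= c%:E * mu D.
Proof.
move=> mD c0 f0 fc; rewrite -integral_cst //.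
apply: int_mono.
- exact: f0.
- by move=> x _ /=; rewrite lee_fin.
- by move=> x Dx; split; [|exact: fc].
Qed.

End intlem.
Section scal.
Context (R : realType).

Lemma expR_inv_bound (x : R) : 0 <= x < 1 -> expR x * (1 - x) <= 1.
Proof.
move=> /andP [x0 x1].
have h1 := expR_ge1Dx (- x).
have h2 : expR x * expR (- x) = 1 by rewrite -expRD subrr expR0.
have h3 := expR_gt0 x.
nra.
Qed.

Lemma expR1_le3 : expR 1 <= 3 :> R.
Proof.
have -> : (1 : R) = 8%:R * (8%:R^-1) by rewrite mulfV.
rewrite expRM_natl.
have h := @expR_inv_bound (8%:R^-1 : R).
have hx : 0 <= (8%:R^-1 : R) < 1.
  by rewrite invr_ge0 ler0n /= invf_lt1 // ?ltr1n // ltr0n.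
move: (h hx) => {h hx}; set u := expR _ => hu.
have u0 : 0 < u by exact: expR_gt0.
have e8 : (8%:R^-1 : R) = 1 / 8 by rewrite div1r.
rewrite e8 in hu.
have hu' : u <= 8 / 7 by rewrite ler_pdivlMr //; lra.
have : u ^+ 8 <= (8 / 7) ^+ 8 by rewrite lerXn2r // ?nnegrE; lra.
move=> h; apply: le_trans h _.
rewrite !exprS expr0; lra.
Qed.

Lemma key_ineq (b : R) : 0 <= b ->
  b * (if b <= 1 then 1 else b^-1) - ln (if b <= 1 then 1 else b^-1) <= ln (1 + 3 * b).
Proof.
move=> b0; case: ifPn => b1.
  rewrite ln1 subr0 mulr1.
  have -> : b = ln (expR b) by rewrite expRK.
  rewrite ler_ln ?posrE ?expR_gt0 //; last by rewrite expRK; lra.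
  rewrite expRK.
  have hx : 0 <= b / 2 < 1 by apply/andP; split; lra.
  have h := @expR_inv_bound (b / 2) hx.
  have -> : expR b = expR (b / 2) ^+ 2 by rewrite -expRM_natr; congr expR; lra.
  set u := expR (b / 2) in h *.
  have u0 : 0 < u by exact: expR_gt0.
  have w0 : 0 < (1 - b / 2) ^+ 2 by rewrite exprn_gt0 //; lra.
  have h2 : (u * (1 - b / 2)) ^+ 2 <= 1.
    rewrite expr2; have : 0 <= u * (1 - b / 2) by rewrite mulr_ge0 //; lra.
    nra.
  have h4 : 0 <= b * (1 - b) * (8 - 3 * b).
    by rewrite !mulr_ge0 //; lra.
  have h3 : 1 <= (1 + 3 * b) * (1 - b / 2) ^+ 2 by rewrite expr2; nra.
  rewrite -(ler_pM2r w0); rewrite exprMn in h2; lra.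
rewrite -ltNge in b1.
have bp : 0 < b by lra.
rewrite mulfV ?gt_eqF // lnV ?posrE // opprK.
have -> : 1 + ln b = ln (expR 1 * b) by rewrite lnM ?posrE ?expR_gt0 // expRK.
rewrite ler_ln ?posrE ?mulr_gt0 ?expR_gt0 //; last by lra.
have := expR1_le3; nra.
Qed.

Lemma ln1p_sqrt (y : R) : 0 <= y -> ln (1 + y) <= 2 * Num.sqrt y.
Proof.
move=> y0.
have s0 : 0 <= Num.sqrt y by exact: sqrtr_ge0.
have sy : Num.sqrt y ^+ 2 = y by rewrite sqr_sqrtr.
apply: (@le_trans _ _ (ln ((1 + Num.sqrt y) ^+ 2))).
  rewrite ler_ln ?posrE; [nra|lra|nra].
rewrite lnXn; last lra.
have h : ln (1 + Num.sqrt y) <= Num.sqrt y by apply: le_ln1Dx; lra.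
rewrite mulr2n; lra.
Qed.

End scal.

Lemma cube_meas (R : realType) d : measurable (cube d : set (d.-tuple R)).
Proof. exact: (@box_meas R d (fun _ => 0) (fun _ => 1)). Qed.

Lemma mu_cube (R : realType) d (mu : {measure set (d.-tuple R) -> \bar R}) :
  lebesgue_tuple d = mu -> mu (cube d) = 1%E.
Proof.
move=> hmu; rewrite -hmu.
have := @lt_box R d (fun _ => 0) (fun _ => 1).
rewrite /box => ->; last by move=> _; exact: ler01.
by rewrite subr0 big1.
Qed.

Lemma fine_le_fin (R : realType) (x : \bar R) (c : R) :
  (0 <= x)%E -> (x <= c%:E)%E -> fine x <= c.
Proof. by case: x => [r| |] //=; rewrite lee_fin. Qed.

Lemma part2 (R : realType) (d : nat) (f : d.-tuple R -> R) :
  (exists M : R, forall x, cube d x -> `|f x| <= M) ->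
  forall eps delta : R, 0 < eps -> 0 < delta -> delta <= 1 ->
   Pgibbs d (fun x => f x / eps)
     [set x | cube d x /\
              f x < eps * Lpart d (fun x => f x / eps) - eps * ln delta^-1]
   <= delta.
Proof.
move=> [M hM] eps delta e0 dl0 dl1.
have [mu hmu] := lt_measure R d.
have mc := cube_meas R d.
have mu1 := mu_cube _ _ _ hmu.
set M' := `|M|.
have hM' : forall x, cube d x -> - M' <= f x <= M'.
  move=> x cx; rewrite -ler_norml; apply: le_trans (hM x cx) _; exact: ler_norm.
set Zi := (\int[mu]_(x in cube d) (expR (f x / eps))%:E)%E.
have Zpe : Zpart d (fun x => f x / eps) = fine Zi by rewrite /Zpart hmu.
have lo : ((expR (- M' / eps))%:E * mu (cube d) <= Zi)%E.
  apply: int_lb => //.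
  move=> x cx; rewrite lee_fin ler_expR ler_pM2r ?invr_gt0 //.
  by have /andP[] := hM' x cx.
have up : (Zi <= (expR (M' / eps))%:E * mu (cube d))%E.
  apply: int_ub => //.
  move=> x cx; rewrite lee_fin ler_expR ler_pM2r ?invr_gt0 //.
  by have /andP[] := hM' x cx.
rewrite mu1 mule1 in lo up.
have [Z [ZiE Zpos]] : exists Z, Zi = Z%:E /\ 0 < Z.
  move: lo up; case: (Zi) => [z| |] //= lo _; exists z; split => //.
  by move: lo; rewrite lee_fin; apply: lt_le_trans; exact: expR_gt0.
rewrite ZiE /= in Zpe.
have LpE : Lpart d (fun x => f x / eps) = ln Z by rewrite /Lpart Zpe.
rewrite /Pgibbs Zpe hmu LpE.
rewrite ler_pdivrMr //.
apply: fine_le_fin; first by apply: integral_ge0 => x _; rewrite lee_fin; apply: ltW; exact: expR_gt0.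
rewrite -[X in (_ <= X%:E)%E]mulr1 EFinM -mu1 -integral_cst //.
apply: int_mono.
- by move=> x _; rewrite lee_fin; apply: ltW; exact: expR_gt0.
- by move=> x _ /=; rewrite lee_fin mulr_ge0 // ltW.
- move=> x [[cx hx] _]; split => //=; rewrite lee_fin.
  have Zd : 0 < delta * Z by rewrite mulr_gt0.
  rewrite -[X in _ <= X](lnK Zd) ler_expR.
  rewrite lnM ?posrE // ler_pdivrMr //.
  rewrite lnV ?posrE // in hx.
  apply: ltW; move: hx; rewrite mulrN opprK mulrDl; lra.
Qed.

Section p1.
Context (R : realType).

Lemma lip_K d (f : d.-tuple R -> R) :
  (exists C : R, forall x y, cube d x -> cube d y ->
      `|f x - f y| <= C * eucl_dist d x y) ->
  0 <= lipconst d f /\ forall x y, cube d x -> cube d y ->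
      `|f x - f y| <= lipconst d f * eucl_dist d x y.
Proof.
move=> [C hC]; rewrite /lipconst; set S := (X in inf X).
have dist0 : forall x y : d.-tuple R, 0 <= eucl_dist d x y.
  by move=> x y; rewrite /eucl_dist; exact: sqrtr_ge0.
have SC : S (Num.max C 0).
  split; first by rewrite le_max lexx orbT.
  move=> x y cx cy; apply: le_trans (hC x y cx cy) _.
  by apply: ler_wpM2r => //; rewrite le_max lexx.
have Sne : S !=set0 by exists (Num.max C 0).
have lbS : lbound S 0 by move=> y [].
have hinf : has_inf S by split => //; exists 0.
split; first exact: lb_le_inf.
move=> x y cx cy; apply/ler_addgt0Pr => e e0.
set D := eucl_dist d x y.
have D0 : 0 <= D := dist0 x y.
have q0 : 0 < e / (D + 1) by rewrite divr_gt0 //; lra.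
have [C' [C'0 hC'] hlt] := inf_adherent q0 hinf.
have h1 := hC' x y cx cy; rewrite -/D in h1.
have hq : e / (D + 1) * (D + 1) = e by rewrite divfK //; lra.
set q := e / (D + 1) in q0 hlt hq.
nra.
Qed.

Lemma dist_le d (x y : d.-tuple R) (s : R) : 0 <= s ->
  (forall i, `|tnth x i - tnth y i| <= s) ->
  eucl_dist d x y <= Num.sqrt d%:R * s.
Proof.
move=> s0 h; rewrite /eucl_dist.
have : \sum_(i < d) (tnth x i - tnth y i) ^+ 2 <= \sum_(i < d) s ^+ 2.
  apply: ler_sum => i _.
  have := h i; rewrite ler_norml => /andP [h1 h2].
  rewrite !expr2; nra.
rewrite sumr_const card_ord => hs.
apply: le_trans (_ : Num.sqrt (d%:R * s ^+ 2) <= _).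
  rewrite ler_sqrt; first by rewrite mulr_natl.
  by rewrite mulr_ge0 ?ler0n // sqr_ge0.
by rewrite sqrtrM // sqrtr_sqr ger0_norm.
Qed.

Lemma lim_part (c : R) (d : nat) : 0 <= c ->
  (fun eps : R => eps * d%:R * ln (1 + c / eps)) x @[x --> 0^'+] --> 0.
Proof.
move=> c0; apply/cvgr0Pnorm_lt => e e0.
pose k : R := 2 * d%:R + 1.
have k0 : 0 < k by rewrite /k; have := ler0n R d; lra.
pose del : R := (e / k) ^+ 2 / (c + 1).
have del0 : 0 < del by rewrite /del divr_gt0 ?exprn_gt0 ?divr_gt0 //; lra.
near=> eps.
have ep : 0 < eps by near: eps; exact: nbhs_right_gt.
have ed : eps < del by near: eps; exact: nbhs_right_lt.
have dn := ler0n R d.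
have ce : 0 <= c / eps by rewrite divr_ge0 // ltW.
have l0 : 0 <= ln (1 + c / eps) by apply: ln_ge0; lra.
have l1 := @ln1p_sqrt R (c / eps) ce.
have sq : eps * Num.sqrt (c / eps) = Num.sqrt (c * eps).
  have -> : c * eps = eps ^+ 2 * (c / eps) by field; rewrite gt_eqF.
  by rewrite [RHS]sqrtrM ?sqr_ge0 // sqrtr_sqr ger0_norm // ltW.
have hlt : Num.sqrt (c * eps) < e / k.
  have ek : 0 < e / k by rewrite divr_gt0.
  rewrite -(ger0_norm (ltW ek)) -sqrtr_sqr ltr_sqrt ?exprn_gt0 //.
  have hd : (c + 1) * del = (e / k) ^+ 2.
    by rewrite /del mulrC divfK // gt_eqF //; lra.
  have : (c + 1) * eps < (c + 1) * del by rewrite ltr_pM2l //; lra.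
  by rewrite hd => h; apply: le_lt_trans h; rewrite ler_pM2r //; lra.
have s0 : 0 <= Num.sqrt (c / eps) by exact: sqrtr_ge0.
rewrite ger0_norm; last by rewrite !mulr_ge0 // ltW.
have hk : e / k * k = e by rewrite divfK // gt_eqF.
set t := Num.sqrt (c * eps) in sq hlt.
set u := Num.sqrt (c / eps) in s0 l1 sq.
set L := ln (1 + c / eps) in l0 l1 *.
set q := e / k in hlt hk.
have t0 : 0 <= t by exact: sqrtr_ge0.
have : eps * d%:R * L <= 2 * d%:R * t.
  rewrite -sq; have := ler_wpM2l (ltW ep) l1; nra.
rewrite /k in hk; nra.
Unshelve. all: by end_near.
Qed.

End p1.
Arguments box {R}.

Lemma part1_bound (R : realType) (d : nat) (dpos : (0 < d)%N)
  (f : d.-tuple R -> R) :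
  (exists C : R, forall x y, cube d x -> cube d y ->
      `|f x - f y| <= C * eucl_dist d x y) ->
  forall eps : R, 0 < eps ->
    `|maxf d f - eps * Lpart d (fun x => f x / eps)|
      <= eps * d%:R * ln (1 + 3 * (Num.sqrt d%:R)^-1 * lipconst d f / eps).
Proof.
move=> hlip eps e0.
have [K0 hK] := @lip_K R d f hlip.
set K := lipconst d f in K0 hK *.
set r := Num.sqrt d%:R.
have dR : (0 : R) < d%:R by rewrite ltr0n.
have r0 : 0 < r by rewrite /r sqrtr_gt0.
have rr : r ^+ 2 = d%:R by rewrite /r sqr_sqrtr // ltW.
pose x0 : d.-tuple R := [tuple (0 : R) | i < d].
have cx0 : cube d x0 by move=> i; rewrite tnth_mktuple lexx ler01.
have cdist : forall x y, cube d x -> cube d y -> eucl_dist d x y <= r.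
  move=> x y cx cy; rewrite -[r]mulr1; apply: dist_le; first exact: ler01.
  move=> i; have /andP [h1 h2] := cx i; have /andP [h3 h4] := cy i.
  rewrite ler_norml; apply/andP; split; lra.
have hub : forall x, cube d x -> f x <= f x0 + K * r.
  move=> x cx; have := hK x x0 cx cx0; rewrite ler_norml => /andP [_ h].
  have := ler_wpM2l K0 (cdist x x0 cx cx0); lra.
have hsup : has_sup (f @` cube d).
  split; first by exists (f x0); exists x0.
  by exists (f x0 + K * r) => _ [x cx <-]; exact: hub.
rewrite /maxf; set M := sup (f @` cube d).
have hM : forall x, cube d x -> f x <= M.
  by move=> x cx; apply: sup_ubound; [exact: hsup.2|exists x].
have [mu hmu] := lt_measure R d.
have mc := cube_meas R d.
have mu1 := mu_cube _ _ _ hmu.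
set Zi := (\int[mu]_(x in cube d) (expR (f x / eps))%:E)%E.
have Zpe : Zpart d (fun x => f x / eps) = fine Zi by rewrite /Zpart hmu.
have up : (Zi <= (expR (M / eps))%:E * mu (cube d))%E.
  apply: int_ub => //.
  by move=> x cx; rewrite lee_fin ler_expR ler_pM2r ?invr_gt0 // hM.
pose b := K / (r * eps).
have b0 : 0 <= b by rewrite /b divr_ge0 // mulr_ge0 // ltW.
pose s := if b <= 1 then 1 else b^-1.
have s0 : 0 < s.
  rewrite /s; case: ifPn => // h; rewrite -ltNge in h.
  by rewrite invr_gt0; lra.
have s1 : s <= 1.
  rewrite /s; case: ifPn => // h; rewrite -ltNge in h.
  by rewrite invf_le1; lra.
have lo : forall eta, 0 < eta ->
    ((expR ((M - eta - K * r * s) / eps) * s ^+ d)%:E <= Zi)%E.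
  move=> eta eta0.
  have [_ [xs cxs <-] hxs] := sup_adherent eta0 hsup.
  pose a (i : nat) := Num.min (nth 0 xs i) (1 - s).
  pose bb (i : nat) := a i + s.
  have hB := @lt_box R d a bb.
  have mB := @box_meas R d a bb.
  have muB : mu (box d a bb) = (s ^+ d)%:E.
    rewrite -hmu hB; last by move=> i; rewrite /bb; lra.
    congr EFin; rewrite (eq_bigr (fun _ => s)); last first.
      by move=> i _; rewrite /bb addrAC subrr add0r.
    by rewrite prodr_const card_ord.
  have key : forall t, box d a bb t -> forall i : 'I_d,
      0 <= tnth t i <= 1 /\ `|tnth t i - tnth xs i| <= s.
    move=> t Bt i; have /andP [h1 h2] := Bt i.
    have /andP [h3 h4] := cxs i.
    rewrite /bb /a (tnth_nth 0 xs) in h1 h2 *.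
    rewrite (tnth_nth 0 xs) in h3 h4.
    set u := nth 0 xs i in h1 h2 h3 h4 *.
    case: (leP u (1 - s)) => hu.
      rewrite min_l // in h1 h2; split; first by apply/andP; split; lra.
      by rewrite ler_norml; apply/andP; split; lra.
    rewrite min_r in h1 h2; last by apply: ltW.
    split; first by apply/andP; split; lra.
    by rewrite ler_norml; apply/andP; split; lra.
  rewrite EFinM -muB.
  apply: int_lb => //.
  - by move=> t Bt i; have [] := key t Bt i.
  - move=> t Bt; rewrite lee_fin ler_expR ler_pM2r ?invr_gt0 //.
    have ct : cube d t by move=> i; have [] := key t Bt i.
    have dts : eucl_dist d t xs <= r * s.
      by apply: dist_le; [exact: ltW|move=> i; have [] := key t Bt i].
    have := hK t xs ct cxs; rewrite ler_norml => /andP [h1 _].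
    have := ler_wpM2l K0 dts; rewrite -/M in hxs; lra.
rewrite mu1 mule1 in up.
have [Z [ZiE Zpos]] : exists Z, Zi = Z%:E /\ 0 < Z.
  move: (lo 1 ltr01) up; case: (Zi) => [z| |] //= lo1 _; exists z; split => //.
  move: lo1; rewrite lee_fin; apply: lt_le_trans.
  by rewrite mulr_gt0 ?exprn_gt0 // expR_gt0.
rewrite ZiE /= in Zpe.
have LpE : Lpart d (fun x => f x / eps) = ln Z by rewrite /Lpart Zpe.
rewrite LpE.
have hZup : ln Z <= M / eps.
  move: up; rewrite ZiE lee_fin => h.
  by rewrite -[M / eps]expRK ler_ln ?posrE ?expR_gt0.
have hMZ : eps * ln Z <= M.
  by move: hZup; rewrite ler_pdivlMr // mulrC.
rewrite ger0_norm; last by lra.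
have hb : 3 * r^-1 * K / eps = 3 * b.
  by rewrite /b; field; rewrite ?gt_eqF //; apply/andP; split; rewrite gt_eqF.
rewrite hb.
have hkey := @key_ineq R b b0.
rewrite -/s in hkey.
have hbs : eps * d%:R * (b * s) = K * r * s.
  rewrite /b -rr; field; rewrite ?gt_eqF //; apply/andP; split; rewrite gt_eqF //.
have hln : forall eta, 0 < eta ->
    (M - eta - K * r * s) / eps + ln s *+ d <= ln Z.
  move=> eta eta0; have := lo eta eta0; rewrite ZiE lee_fin => h.
  have p0 : 0 < expR ((M - eta - K * r * s) / eps) * s ^+ d.
    by rewrite mulr_gt0 ?exprn_gt0 // expR_gt0.
  have := h; rewrite -ler_ln ?posrE // lnM ?posrE ?expR_gt0 ?exprn_gt0 //.
  by rewrite expRK lnXn.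
apply/ler_addgt0Pr => eta eta0.
have h1 := hln eta eta0.
rewrite -mulr_natr in h1.
have h2 : M - eta - K * r * s + eps * (ln s * d%:R) <= eps * ln Z.
  move: h1; rewrite -(ler_pM2l e0) mulrDr mulrCA mulfV ?gt_eqF // mulr1.
  by [].
have h3 : eps * d%:R * (b * s - ln s) <= eps * d%:R * ln (1 + 3 * b).
  by apply: ler_wpM2l => //; rewrite mulr_ge0 // ltW.
move: h3; rewrite mulrBr hbs; lra.
Qed.

Theorem lemma1 (R : realType) (d : nat) (dpos : (0 < d)%N) :
  (forall f : d.-tuple R -> R,
     (exists C : R, forall x y, cube d x -> cube d y ->
          `|f x - f y| <= C * eucl_dist d x y) ->
     (forall eps : R, 0 < eps ->
        `|maxf d f - eps * Lpart d (fun x => f x / eps)|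
          <= eps * d%:R
             * ln (1 + 3 * (Num.sqrt d%:R)^-1 * lipconst d f / eps)) /\
     ((fun eps : R => eps * d%:R
             * ln (1 + 3 * (Num.sqrt d%:R)^-1 * lipconst d f / eps))
        x @[x --> 0^'+] --> 0)) /\
  (forall f : d.-tuple R -> R,
     measurable_fun (cube d) f ->
     (exists M : R, forall x, cube d x -> `|f x| <= M) ->
     forall eps delta : R, 0 < eps -> 0 < delta -> delta <= 1 ->
       Pgibbs d (fun x => f x / eps)
         [set x | cube d x /\
                  f x < eps * Lpart d (fun x => f x / eps) - eps * ln delta^-1]
       <= delta).
Proof.
split.
  move=> f hlip; split; first exact: part1_bound.
  apply: lim_part.
  have [K0 _] := @lip_K R d f hlip.
  by rewrite !mulr_ge0 // invr_ge0 sqrtr_ge0.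
move=> f _ hM; exact: part2.
Qed.
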